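(* Let $k\ge 2$. The $3$-graph $\mathcal{E}\cup\mathcal{F}$ contains no three edges whose union has exactly $4$ vertices.
   Context: Let $A_1=\{v^1_1,\dots,v^1_{4k-3}\}$, $A_2=\{v^2_1,\dots,v^2_{4k-3}\}$ be disjoint sets and $v_1^3$ a further vertex. For $i\in[1,k-1]$ define the sets of $3$-edges (writing $xyz$ for $\{x,y,z\}$) $\mathcal{E}_{1,i}=\{v_{2i-1}^1v_j^2v_{j+1}^2 : j\in[2i-1,4k-2-2i]\}$, $\mathcal{E}_{2,i}=\{v_j^1v_{j+1}^1v_{4k-1-2i}^2 : j\in[2i-1,4k-2-2i]\}$, $\mathcal{E}_{3,i}=\{v_{4k-1-2i}^1v_j^2v_{j+1}^2 : j\in[2i+1,4k-2-2i]\}$, $\mathcal{E}_{4,i}=\{v_j^1v_{j+1}^1v_{2i+1}^2 : j\in[2i+1,4k-2-2i]\}$, $\mathcal{E}_i=\mathcal{E}_{1,i}\cup\mathcal{E}_{2,i}\cup\mathcal{E}_{3,i}\cup\mathcal{E}_{4,i}$, and $\mathcal{E}=\bigcup_{i=1}^{k-1}\mathcal{E}_i$. Let $\mathcal{F}=\{v_j^lv_{j+1}^lv_1^3 : j\in[1,4k-4],\ l\in\{1,2\}\}$. *)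

(* Defs.v *)
From HB Require Import structures.
From mathcomp Require Import all_boot finmap.
Set Implicit Arguments. Unset Strict Implicit. Unset Printing Implicit Defensive.
Local Open Scope fset_scope.

Definition vtx : Type := (nat * nat)%type.
Definition v (l j : nat) : vtx := (l, j).

Definition edge3 (x y z : vtx) : {fset vtx} := [fset x; y; z].

Definition inE1 (k i : nat) (e : {fset vtx}) : Prop :=
  exists j, 2*i-1 <= j <= 4*k-2-2*i /\ e = edge3 (v 1 (2*i-1)) (v 2 j) (v 2 j.+1).
Definition inE2 (k i : nat) (e : {fset vtx}) : Prop :=
  exists j, 2*i-1 <= j <= 4*k-2-2*i /\ e = edge3 (v 1 j) (v 1 j.+1) (v 2 (4*k-1-2*i)).
Definition inE3 (k i : nat) (e : {fset vtx}) : Prop :=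
  exists j, 2*i+1 <= j <= 4*k-2-2*i /\ e = edge3 (v 1 (4*k-1-2*i)) (v 2 j) (v 2 j.+1).
Definition inE4 (k i : nat) (e : {fset vtx}) : Prop :=
  exists j, 2*i+1 <= j <= 4*k-2-2*i /\ e = edge3 (v 1 j) (v 1 j.+1) (v 2 (2*i+1)).

Definition inE (k : nat) (e : {fset vtx}) : Prop :=
  exists i, 1 <= i <= k-1 /\ (inE1 k i e \/ inE2 k i e \/ inE3 k i e \/ inE4 k i e).

Definition inF (k : nat) (e : {fset vtx}) : Prop :=
  exists l j, (l = 1 \/ l = 2) /\ 1 <= j <= 4*k-4 /\ e = edge3 (v l j) (v l j.+1) (v 3 1).

Definition inEF (k : nat) (e : {fset vtx}) : Prop := inE k e \/ inF k e.

(* Main.v *)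
Require Import Defs.
From mathcomp Require Import all_boot finmap zify.
Local Open Scope fset_scope.

Lemma K (A B C : {fset vtx}) x : #|` B| = 3 -> #|` C| = 3 -> B <> C ->
  #|` A `|` B `|` C| = 4 -> x \in A -> x \in B \/ x \in C.
Proof.
move=> hB hC hBC hU xA.
case: (boolP (x \in B)) => xB; first by left.
case: (boolP (x \in C)) => xC; first by right.
exfalso.
set U := A `|` B `|` C.
have xU : x \in U by rewrite /U !inE xA.
have hD : #|` U `\ x| = 3 by move: hU; rewrite (cardfsD1 x U) xU; case.
have sB : B `<=` U `\ x by rewrite fsubsetD1 xB andbT /U fsubsetU // fsubsetUr.
have sC : C `<=` U `\ x by rewrite fsubsetD1 xC andbT /U fsubsetUr.
have eB : B = U `\ x by apply/eqP; rewrite eqEfcard sB hB hD.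
have eC : C = U `\ x by apply/eqP; rewrite eqEfcard sC hC hD.
by apply: hBC; rewrite eB eC.
Qed.

Lemma card3 (a b c : vtx) : a != b -> a != c -> b != c -> #|` edge3 a b c| = 3.
Proof.
move=> ab ac bc; rewrite /edge3 fsetUC !cardfsU1 cardfs1 !inE.
rewrite eq_sym in ac; rewrite eq_sym in bc; by rewrite (negbTE ab) (negbTE ac) (negbTE bc).
Qed.


Inductive kind := AB | BA | Fa | Fb.
Definition code t := match t with AB => 0 | BA => 1 | Fa => 2 | Fb => 3 end.
Definition vA t (p j : nat) := match t with AB => v 1 p | BA => v 1 j | Fa => v 1 j | Fb => v 2 j end.
Definition vB t (p j : nat) := match t with AB => v 2 j | BA => v 1 j.+1 | Fa => v 1 j.+1 | Fb => v 2 j.+1 end.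
Definition vC t (p j : nat) := match t with AB => v 2 j.+1 | BA => v 2 p | Fa => v 3 1 | Fb => v 3 1 end.
Definition mk t p j := edge3 (vA t p j) (vB t p j) (vC t p j).
Definition valid t p := match t with AB | BA => p %% 2 = 1 | _ => p = 0 end.

Lemma mk_card t p j : #|` mk t p j| = 3.
Proof. by case: t; apply: card3; apply/eqP; rewrite /v => -[]; lia. Qed.

Ltac srch := first [ lia | match goal with H : _ \/ _ |- _ => destruct H; srch end].

Lemma core t1 p1 j1 t2 p2 j2 t3 p3 j3 :
  valid t1 p1 -> valid t2 p2 -> valid t3 p3 ->
  ~ (code t1 = code t2 /\ p1 = p2 /\ j1 = j2) ->
  ~ (code t1 = code t3 /\ p1 = p3 /\ j1 = j3) ->
  ~ (code t2 = code t3 /\ p2 = p3 /\ j2 = j3) ->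
  (forall x, x \in mk t1 p1 j1 -> x \in mk t2 p2 j2 \/ x \in mk t3 p3 j3) ->
  (forall x, x \in mk t2 p2 j2 -> x \in mk t1 p1 j1 \/ x \in mk t3 p3 j3) ->
  (forall x, x \in mk t3 p3 j3 -> x \in mk t1 p1 j1 \/ x \in mk t2 p2 j2) ->
  False.
Proof.
move=> V1 V2 V3 D12 D13 D23 H1 H2 H3.
have a1 := H1 (vA t1 p1 j1). have b1 := H1 (vB t1 p1 j1). have c1 := H1 (vC t1 p1 j1).
have a2 := H2 (vA t2 p2 j2). have b2 := H2 (vB t2 p2 j2). have c2 := H2 (vC t2 p2 j2).
have a3 := H3 (vA t3 p3 j3). have b3 := H3 (vB t3 p3 j3). have c3 := H3 (vC t3 p3 j3).
clear H1 H2 H3.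
move: a1 b1 c1 a2 b2 c2 a3 b3 c3; rewrite /mk /edge3 !inE !eqxx ?orbT /v.
case: t1 V1 D12 D13; case: t2 V2 D23; case: t3 V3; rewrite /= ?xpair_eqE /=;
 move=> V3 V2 D23 V1 D12 D13 a1 b1 c1 a2 b2 c2 a3 b3 c3;
 have {a1} a1 := a1 isT; have {b1} b1 := b1 isT; have {c1} c1 := c1 isT;
 have {a2} a2 := a2 isT; have {b2} b2 := b2 isT; have {c2} c2 := c2 isT;
 have {a3} a3 := a3 isT; have {b3} b3 := b3 isT; have {c3} c3 := c3 isT;
 lia.
Qed.

Lemma repr k e : 2 <= k -> inEF k e -> exists t p j, valid t p /\ e = mk t p j.
Proof.
move=> hk [[i [hi [[j [hj ->]]|[[j [hj ->]]|[[j [hj ->]]|[j [hj ->]]]]]]]|[l [j [[->|->] [hj ->]]]]].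
- by exists AB, (2*i-1)%N, j; split => //=; lia.
- by exists BA, (4*k-1-2*i)%N, j; split => //=; lia.
- by exists AB, (4*k-1-2*i)%N, j; split => //=; lia.
- by exists BA, (2*i+1)%N, j; split => //=; lia.
- by exists Fa, 0, j.
- by exists Fb, 0, j.
Qed.

Lemma code_inj t1 t2 : code t1 = code t2 -> t1 = t2.
Proof. by case: t1; case: t2. Qed.

Theorem lemma3p1 (k : nat) (hk : 2 <= k) (e1 e2 e3 : {fset vtx}) :
  inEF k e1 -> inEF k e2 -> inEF k e3 ->
  e1 <> e2 -> e1 <> e3 -> e2 <> e3 ->
  #|` e1 `|` e2 `|` e3| <> 4.
Proof.
move=> /(repr _ _ hk) [t1 [p1 [j1 [V1 E1]]]] /(repr _ _ hk) [t2 [p2 [j2 [V2 E2]]]]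
  /(repr _ _ hk) [t3 [p3 [j3 [V3 E3]]]] n12 n13 n23 hU.
have c1 := mk_card t1 p1 j1. have c2 := mk_card t2 p2 j2. have c3 := mk_card t3 p3 j3.
have hU2 : #|` e2 `|` e1 `|` e3| = 4 by rewrite (fsetUC e2 e1).
have hU3 : #|` e3 `|` e1 `|` e2| = 4 by rewrite -fsetUA fsetUC.
subst e1 e2 e3.
apply: (core t1 p1 j1 t2 p2 j2 t3 p3 j3 V1 V2 V3).
- by move=> [/code_inj E [Ep Ej]]; apply: n12; subst.
- by move=> [/code_inj E [Ep Ej]]; apply: n13; subst.
- by move=> [/code_inj E [Ep Ej]]; apply: n23; subst.
- by move=> x; apply: K.
- by move=> x; apply: K.
- by move=> x; apply: K.
Qed.
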